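(* There is no SLCS formula $\varphi$ such that for every quasi-discrete neighbourhood model $\mathcal M$ with underlying space $(X,\mathcal N)$: $(X,\mathcal N)$ is $T_0$-separated if and only if $\mathcal M,x\models\varphi$ for every $x\in X$. (In particular, there exist a $T_0$-separated and a non-$T_0$-separated quasi-discrete model with a path preserving bisimulation between them relating every point of each model to some point of the other.)
   Context: A neighbourhood space $(X,\mathcal N)$ assigns to each $x\in X$ a filter $\mathcal N(x)$ on $X$ (closed under finite intersections and supersets, not containing $\emptyset$) such that $x\in N$ for all $N\in\mathcal N(x)$. Closure: $\mathcal C(A)=\{x\mid\forall N\in\mathcal N(x): A\cap N\neq\emptyset\}$. Continuity: $f$ continuous iff $f^{-1}[N]\in\mathcal N_1(x)$ for all $N\in\mathcal N_2(f(x))$. The space is quasi-discrete if each $x$ has a minimal neighbourhood $N_{\min}(x)\in\mathcal N(x)$ contained in every element of $\mathcal N(x)$. A quasi-discrete neighbourhood model is $\mathcal M=((X,\mathcal N),\mathbb N,V)$ with $(X,\mathcal N)$ quasi-discrete, index space the natural numbers with order $\le$, least element $0$ and the quasi-discrete neighbourhood system with $N_{\min}(n)=\{n,n+1\}$, and valuation $V:X\to\mathcal P(\mathsf P)$ for a fixed countable set $\mathsf P$ of atoms. A path is a continuous map $p:\mathbb N\to X$. The space is $T_0$-separated if for all $x,y\in X$, $y\in\mathcal C(\{x\})$ and $x\in\mathcal C(\{y\})$ imply $x=y$. SLCS formulas: $\varphi::=a\mid\top\mid\neg\varphi\mid\varphi\wedge\varphi\mid\mathcal N\varphi\mid\varphi\,\mathcal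 R\,\varphi\mid\varphi\,\mathcal P\,\varphi$ with $a\in\mathsf P$. Semantics: $\mathcal M,x\models a$ iff $a\in V(x)$; Booleans as usual; $\mathcal M,x\models\mathcal N\varphi$ iff $x\in\mathcal C(\{y\mid\mathcal M,y\models\varphi\})$; $\mathcal M,x\models\varphi\,\mathcal R\,\psi$ iff there are a path $p$ and $n$ with $p(n)=x$, $\mathcal M,p(0)\models\psi$ and $\mathcal M,p(i)\models\varphi$ for all $0<i\le n$; $\mathcal M,x\models\varphi\,\mathcal P\,\psi$ iff there are a path $p$ with $p(0)=x$ and $n$ with $\mathcal M,p(n)\models\psi$ and $\mathcal M,p(i)\models\varphi$ for all $0\le i<n$. Path preserving bisimulation: for models $\mathcal M_1,\mathcal M_2$ over the same index space with path sets $\mathcal P_1,\mathcal P_2$, a triple $(Z_{\mathcal N},Z_1,Z_2)$, $\emptyset\ne Z_{\mathcal N}\subseteq X_1\times X_2$, $Z_1\subseteq(\mathcal P_1\times I)\times(\mathcal P_2\times I)$, $Z_2\subseteq(\mathcal P_2\times I)\times(\mathcal P_1\times I)$, such that: (1) at each pair $x_1Z_{\mathcal N}x_2$: $V_1(x_1)=V_2(x_2)$; for every $N_2\in\mathcal N_2(x_2)$ there is $N_1\in\mathcal N_1(x_1)$ with every $y_1\in N_1$ related to some $y_2\in N_2$; and symmetrically for every $N_1\in\mathcal N_1(x_1)$; (2) if $x_1Z_{\mathcal N}x_2$, $p(0)=x_1$, $n\ne0$, there are $q$ with $q(0)=x_2$ and $m$ with $p(n)Z_{\mathcal N}q(m)$,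 $(p,n)Z_1(q,m)$; (3) if $x_1Z_{\mathcal N}x_2$, $p(n)=x_1$, $n\ne0$, there are $q,m$ with $q(m)=x_2$, $p(0)Z_{\mathcal N}q(0)$, $(p,n)Z_1(q,m)$; (4) if $(p,n)Z_1(q,m)$ and $0<k_q<m$, there is $0<k_p<n$ with $p(k_p)Z_{\mathcal N}q(k_q)$; (5)–(7) the symmetric conditions with roles of the models swapped and $Z_2$ in place of $Z_1$ (i.e. (5) if $x_1Z_{\mathcal N}x_2$, $q(0)=x_2$, $m\ne0$, there are $p$ with $p(0)=x_1$ and $n$ with $p(n)Z_{\mathcal N}q(m)$, $(q,m)Z_2(p,n)$; (6) if $x_1Z_{\mathcal N}x_2$, $q(m)=x_2$, $m\neq0$, there are $p,n$ with $p(n)=x_1$, $p(0)Z_{\mathcal N}q(0)$, $(q,m)Z_2(p,n)$; (7) if $(q,m)Z_2(p,n)$ and $0<k_p<n$, there is $0<k_q<m$ with $p(k_p)Z_{\mathcal N}q(k_q)$). *)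

(* Defs.v *)
From Stdlib Require Import Arith.

Set Implicit Arguments.

Definition set (X : Type) := X -> Prop.

Definition is_nbhd_system (X : Type) (N : X -> set X -> Prop) : Prop :=
  forall x : X,
    N x (fun _ => True) /\
    (forall A B, N x A -> N x B -> N x (fun y => A y /\ B y)) /\
    (forall A B, N x A -> (forall y, A y -> B y) -> N x B) /\
    ~ N x (fun _ => False) /\
    (forall A, N x A -> A x).

Definition quasi_discrete (X : Type) (N : X -> set X -> Prop) : Prop :=
  forall x : X, exists Nmin : set X,
    N x Nmin /\ forall A, N x A -> forall y, Nmin y -> A y.

Definition closure (X : Type) (N : X -> set X -> Prop) (A : set X) : set X :=
  fun x => forall S, N x S -> exists y, S y /\ A y.

Definition continuous (X1 X2 : Type) (N1 : X1 -> set X1 -> Prop)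
  (N2 : X2 -> set X2 -> Prop) (f : X1 -> X2) : Prop :=
  forall x S, N2 (f x) S -> N1 x (fun y => S (f y)).

(* The index space: natural numbers, quasi-discrete with N_min(n) = {n, n+1}. *)
Definition natN (n : nat) (A : set nat) : Prop :=
  forall m, (m = n \/ m = S n) -> A m.

Definition T0 (X : Type) (N : X -> set X -> Prop) : Prop :=
  forall x y : X, closure N (fun z => z = x) y -> closure N (fun z => z = y) x -> x = y.

Record qd_model := QDModel {
  carrier : Type;
  nbhd : carrier -> set carrier -> Prop;
  nbhd_ok : is_nbhd_system nbhd;
  nbhd_qd : quasi_discrete nbhd;
  val : carrier -> set nat
}.

Definition is_path (M : qd_model) (p : nat -> carrier M) : Prop :=
  continuous natN (@nbhd M) p.

Inductive formula : Type :=
| FAtom : nat -> formula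
| FTop : formula
| FNot : formula -> formula
| FAnd : formula -> formula -> formula
| FNear : formula -> formula
| FReach : formula -> formula -> formula
| FProp : formula -> formula -> formula.

Fixpoint sat (M : qd_model) (f : formula) : set (carrier M) :=
  match f with
  | FAtom a => fun x => val M x a
  | FTop => fun _ => True
  | FNot g => fun x => ~ sat M g x
  | FAnd g h => fun x => sat M g x /\ sat M h x
  | FNear g => closure (@nbhd M) (sat M g)
  | FReach g h => fun x => exists (p : nat -> carrier M) (n : nat),
      is_path M p /\ p n = x /\ sat M h (p 0) /\
      (forall i, 0 < i <= n -> sat M g (p i))
  | FProp g h => fun x => exists (p : nat -> carrier M) (n : nat),
      is_path M p /\ p 0 = x /\ sat M h (p n) /\
      (forall i, i < n -> sat M g (p i))
  end.

(* Main.v *)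
Require Import Defs.

Definition indN (X : Type) (x : X) (A : set X) : Prop := forall y, A y.

Lemma ind_ok (X : Type) : is_nbhd_system (@indN X).
Proof.
  intros x; unfold indN; repeat split; intros; firstorder.
Qed.

Lemma ind_qd (X : Type) : quasi_discrete (@indN X).
Proof. intros x; exists (fun _ => True); unfold indN; firstorder. Qed.

Definition M1 : qd_model := QDModel (ind_ok unit) (ind_qd unit) (fun _ _ => False).
Definition M2 : qd_model := QDModel (ind_ok bool) (ind_qd bool) (fun _ _ => False).

Lemma equiv_sat : forall phi (x : bool), sat M2 phi x <-> sat M1 phi tt.
Proof.
  induction phi; intros x; simpl.
  - tauto.
  - tauto.
  - rewrite (IHphi x); tauto.
  - rewrite (IHphi1 x), (IHphi2 x); tauto.
  - unfold closure, indN; split.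
    + intros H. destruct (H (fun _ => True) (fun _ => I)) as [y [_ Hy]].
      intros S HS. exists tt; split; [apply HS|]. apply (IHphi y); exact Hy.
    + intros H. destruct (H (fun _ => True) (fun _ => I)) as [y [_ Hy]].
      destruct y. intros S HS. exists x; split; [apply HS|]. apply (IHphi x); exact Hy.
  - split.
    + intros [p [n [Hp [Hn [Hh Hg]]]]].
      exists (fun _ => tt), n. split; [|split; [reflexivity|split]].
      * intros k S HS m _. apply HS.
      * apply (IHphi2 (p 0)); exact Hh.
      * intros i Hi. apply (IHphi1 (p i)); apply Hg; exact Hi.
    + intros [p [n [Hp [Hn [Hh Hg]]]]].
      exists (fun _ => x), n. split; [|split; [reflexivity|split]].
      * intros k S HS m _. apply HS.
      * apply (IHphi2 x). destruct (p 0); exact Hh.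
      * intros i Hi. apply (IHphi1 x). generalize (Hg i Hi). destruct (p i); auto.
  - split.
    + intros [p [n [Hp [Hn [Hh Hg]]]]].
      exists (fun _ => tt), n. split; [|split; [reflexivity|split]].
      * intros k S HS m _. apply HS.
      * apply (IHphi2 (p n)); exact Hh.
      * intros i Hi. apply (IHphi1 (p i)); apply Hg; exact Hi.
    + intros [p [n [Hp [Hn [Hh Hg]]]]].
      exists (fun _ => x), n. split; [|split; [reflexivity|split]].
      * intros k S HS m _. apply HS.
      * apply (IHphi2 x). destruct (p n); exact Hh.
      * intros i Hi. apply (IHphi1 x). generalize (Hg i Hi). destruct (p i); auto.
Qed.

Theorem proposition19 :
  ~ exists phi : formula,
      forall M : qd_model,
        (T0 (@nbhd M) <-> forall x : carrier M, sat M phi x).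
Proof.
  intros [phi H].
  assert (H1 : forall x : carrier M1, sat M1 phi x).
  { apply (proj1 (H M1)). intros [] [] _ _; reflexivity. }
  assert (H2 : T0 (@nbhd M2)).
  { apply (proj2 (H M2)). intros x. apply equiv_sat. apply H1. }
  assert (E : true = false).
  { apply H2; simpl; unfold closure, indN; intros S HS.
    - exists true; split; auto.
    - exists false; split; auto. }
  discriminate E.
Qed.
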